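(* A balanced wiring $F$ is nilpotent if and only if its computation graph $\mathbf G(F)$ is acyclic.
   Context: Terms: first-order terms built from an infinite set of variables, a binary function symbol $\bullet$ written infix, infinitely many constant symbols including a distinguished constant $\star$, and for each $n\ge1$ at least one $n$-ary function symbol. $\mathrm{var}(t)$ is the set of variables of $t$; $t$ is closed if $\mathrm{var}(t)=\emptyset$. The height $h(t)$ is the maximal distance from the root to a node in the tree of $t$; the height of an occurrence of a variable in $t$ is its distance from the root. A flow is a pair of terms written $t\leftarrow u$ with $\mathrm{var}(t)\subseteq\mathrm{var}(u)$, considered up to renaming. A fact is a flow $t\leftarrow\star$ (so $t$ is closed). The product of flows $u\leftarrow v$ and $t\leftarrow w$ (representatives chosen with disjoint variable sets) is defined iff $v$ and $t$ are unifiable, and then equals $u\theta\leftarrow w\theta$ with $\theta$ a most general unifier of $v,t$. A wiring is a finite set of flows, written as a formal sum, with $0$ the empty wiring; product $FG=\{fg: f\in F,g\in G, fg\text{ defined}\}$, $F^n$ the $n$-fold product. For a fact $\mathbf u$, $F\mathbf u$ denotes $F\{\mathbf u\}$ (a set of facts). $F$ is nilpotent if $F^n=0$ for some $n\in\mathbb N$. A flow $t\leftarrow u$ is balanced if for every variable $x$, all occurrences of $x$ in $t$ and in $u$ have the same height; a wiring is balanced if all its flows are. The height of a flow $t\leftarrow u$ is $\max\{h(t),h(u)\}$; the height $h(F)$ of a wiring is the maximal height of its flows. For a balanced wiring $F$, its computation space $\mathrm{Comp}(F)$ is the set of facts $t\leftarrow\star$ with $h(t)\le h(F)$ and $t$ built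 using only symbols occurring in $F$ and the constant $\star$. The computation graph $\mathbf G(F)$ is the directed graph with vertex set $\mathrm{Comp}(F)$ and an edge from $\mathbf u$ to $\mathbf v$ iff $\mathbf v\in F\mathbf u$. *)

(* Defs.v *)
From Stdlib Require Import List Arith Relations.
Import ListNotations.

Record signature := Sig {
  sym : Type;
  arity : sym -> nat;
  star : sym;
  bullet : sym;
  arity_star : arity star = 0;
  arity_bullet : arity bullet = 2;
  const : nat -> sym;
  const_inj : forall m n, const m = const n -> m = n;
  arity_const : forall n, arity (const n) = 0;
  fun_exists : forall n, 1 <= n -> exists f, arity f = n
}.

Section Terms.
Variable Sg : signature.

Inductive term : Type :=
| Var (x : nat)
| App (f : sym Sg) (ts : list term).

Fixpoint wf (t : term) : Prop :=
  match t with
  | Var _ => True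
  | App f ts => length ts = arity Sg f /\
      (fix wfl (l : list term) : Prop :=
         match l with [] => True | u :: l' => wf u /\ wfl l' end) ts
  end.

Fixpoint occurs (x : nat) (t : term) : Prop :=
  match t with
  | Var y => x = y
  | App _ ts =>
      (fix ol (l : list term) : Prop :=
         match l with [] => False | u :: l' => occurs x u \/ ol l' end) ts
  end.

Definition closed (t : term) : Prop := forall x, ~ occurs x t.

Fixpoint sym_occurs (f : sym Sg) (t : term) : Prop :=
  match t with
  | Var _ => False
  | App g ts => f = g \/
      (fix ol (l : list term) : Prop :=
         match l with [] => False | u :: l' => sym_occurs f u \/ ol l' end) ts
  end.

Fixpoint height (t : term) : nat :=
  match t with
  | Var _ => 0
  | App _ ts =>
      (fix hl (l : list term) : nat :=
         match l with [] => 0 | u :: l' => Nat.max (S (height u)) (hl l') end) ts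
  end.

Fixpoint occ_heights (x : nat) (t : term) : list nat :=
  match t with
  | Var y => if Nat.eqb x y then [0] else []
  | App _ ts =>
      map S ((fix ol (l : list term) : list nat :=
         match l with [] => [] | u :: l' => occ_heights x u ++ ol l' end) ts)
  end.

Fixpoint subst (th : nat -> term) (t : term) : term :=
  match t with
  | Var x => th x
  | App f ts => App f (map (subst th) ts)
  end.

Definition rename (s : nat -> nat) (t : term) : term :=
  subst (fun x => Var (s x)) t.

Definition is_mgu (th : nat -> term) (a b : term) : Prop :=
  subst th a = subst th b /\
  forall sg : nat -> term, subst sg a = subst sg b ->
    exists rho : nat -> term, forall x, sg x = subst rho (th x).

(* a flow t <- u is represented by the pair (t, u) *)
Definition flow : Type := (term * term)%type.

Definition is_flow (f : flow) : Prop :=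
  wf (fst f) /\ wf (snd f) /\ (forall x, occurs x (fst f) -> occurs x (snd f)).

Definition flow_equiv (f g : flow) : Prop :=
  exists s : nat -> nat, (forall x y, s x = s y -> x = y) /\
    rename s (fst f) = fst g /\ rename s (snd f) = snd g.

Definition flow_occurs (x : nat) (f : flow) : Prop :=
  occurs x (fst f) \/ occurs x (snd f).

(* [prod f g r]: the product f g of flows f = (u <- v), g = (t <- w) is
   defined and r is a representative of it: rename g apart from f into
   (t' <- w'), take a most general unifier theta of v and t', and r is
   (u theta <- w' theta) up to renaming. *)
Definition prod (f g r : flow) : Prop :=
  exists (s : nat -> nat) (th : nat -> term),
    (forall x y, s x = s y -> x = y) /\
    (forall x, flow_occurs x f -> forall y, flow_occurs y g -> s y <> x) /\
    is_mgu th (snd f) (rename s (fst g)) /\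
    flow_equiv (subst th (fst f), subst th (rename s (snd g))) r.

(* a wiring: a finite set of flows, given by a list of representatives *)
Definition wiring : Type := list flow.

Definition is_wiring (F : wiring) : Prop := forall f, In f F -> is_flow f.

(* [pow F n g]: g is (a representative of) an element of F^(n+1),
   where F^(k+1) = F F^k *)
Fixpoint pow (F : wiring) (n : nat) (g : flow) : Prop :=
  match n with
  | 0 => exists f, In f F /\ flow_equiv f g
  | S m => exists f h, In f F /\ pow F m h /\ prod f h g
  end.

(* F nilpotent: F^n = 0 for some n (F^0 is the identity, never 0, so we
   quantify over n+1) *)
Definition nilpotent (F : wiring) : Prop :=
  exists n, forall g, ~ pow F n g.

Definition balanced_flow (f : flow) : Prop :=
  forall x h1 h2,
    In h1 (occ_heights x (fst f) ++ occ_heights x (snd f)) ->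
    In h2 (occ_heights x (fst f) ++ occ_heights x (snd f)) -> h1 = h2.

Definition balanced (F : wiring) : Prop := forall f, In f F -> balanced_flow f.

Definition flow_height (f : flow) : nat := Nat.max (height (fst f)) (height (snd f)).

Definition wiring_height (F : wiring) : nat :=
  fold_right (fun f m => Nat.max (flow_height f) m) 0 F.

Definition starT : term := App (star Sg) [].

Definition fact (t : term) : flow := (t, starT).

(* the fact t <- star belongs to Comp(F) *)
Definition in_comp (F : wiring) (t : term) : Prop :=
  wf t /\ closed t /\ height t <= wiring_height F /\
  (forall g, sym_occurs g t ->
     g = star Sg \/ exists f, In f F /\ (sym_occurs g (fst f) \/ sym_occurs g (snd f))).

Definition comp_edge (F : wiring) (t t' : term) : Prop :=
  in_comp F t /\ in_comp F t' /\
  exists f, In f F /\ prod f (fact t) (fact t').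

Definition acyclic (F : wiring) : Prop :=
  ~ exists t, clos_trans term (comp_edge F) t t.

End Terms.

Arguments Var {Sg}.
Arguments App {Sg}.

(* Main.v *)
Require Import Defs.
From Stdlib Require Import List Arith Relations Lia ClassicalEpsilon Classical.
Import ListNotations.

Section S1.
Variable Sg : signature.
Local Notation tm := (term Sg).
Local Notation sb := (subst Sg).

Lemma term_ind' (P : tm -> Prop) :
  (forall x, P (Var x)) -> (forall f ts, Forall P ts -> P (App f ts)) -> forall t, P t.
Proof.
  intros HV HA. fix IH 1. intros [x|f ts].
  - apply HV.
  - apply HA. induction ts as [|u l IHl]; constructor; [apply IH | exact IHl].
Qed.

Lemma wf_App f ts : wf Sg (App f ts) <-> length ts = arity Sg f /\ Forall (wf Sg) ts.
Proof.
  simpl. split; intros [H1 H2]; split; auto; clear H1.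
  - induction ts; simpl in *; [constructor|]. destruct H2; constructor; auto.
  - induction ts; simpl in *; auto. inversion H2; subst; split; auto. apply IHts; auto.
Qed.

Lemma occurs_App x f ts : occurs Sg x (App f ts) <-> Exists (occurs Sg x) ts.
Proof.
  simpl. induction ts; simpl; split; intro H.
  - destruct H.
  - inversion H.
  - destruct H; [left; auto | right; apply IHts; auto].
  - inversion H; subst; [left; auto | right; apply IHts; auto].
Qed.

Lemma sym_occurs_App g f ts : sym_occurs Sg g (App f ts) <-> g = f \/ Exists (sym_occurs Sg g) ts.
Proof.
  simpl. split; intros [H|H]; auto; right; induction ts; simpl in *.
  - destruct H.
  - destruct H; [left; auto | right; apply IHts; auto].
  - inversion H.
  - inversion H; subst; [left; auto | right; apply IHts; auto].
Qed.

Lemma height_cons f u l : height Sg (App f (u :: l)) = Nat.max (S (height Sg u)) (height Sg (App f l)).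
Proof. reflexivity. Qed.
Lemma height_nil f : height Sg (App f []) = 0.
Proof. reflexivity. Qed.

Lemma height_App_le f ts d : height Sg (App f ts) <= d <-> Forall (fun u => S (height Sg u) <= d) ts.
Proof.
  induction ts; [rewrite height_nil; split; intro; auto; lia|].
  rewrite height_cons, Nat.max_lub_iff, IHts. split.
  - intros [A B]; constructor; auto.
  - intro H; inversion H; auto.
Qed.

Lemma occ_heights_App x f ts : occ_heights Sg x (App f ts) = map S (flat_map (occ_heights Sg x) ts).
Proof.
  simpl. f_equal. 
Qed.

Lemma subst_App th f ts : sb th (App f ts) = App f (map (sb th) ts).
Proof. reflexivity. Qed.

Lemma subst_comp s1 s2 t : sb s2 (sb s1 t) = sb (fun x => sb s2 (s1 x)) t.
Proof.
  induction t using term_ind'; simpl; auto. f_equal.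
  rewrite map_map. apply map_ext_in. intros a Ha. rewrite Forall_forall in H. auto.
Qed.

Lemma subst_ext_occ s1 s2 t : (forall x, occurs Sg x t -> s1 x = s2 x) -> sb s1 t = sb s2 t.
Proof.
  induction t using term_ind'; intro E; simpl.
  - apply E. simpl. auto.
  - f_equal. apply map_ext_in. intros a Ha. rewrite Forall_forall in H. apply H; auto.
    intros x Hx. apply E. apply occurs_App. apply Exists_exists. eauto.
Qed.

Lemma subst_Var t : sb (fun x => Var x) t = t.
Proof.
  induction t using term_ind'; simpl; auto. f_equal.
  rewrite Forall_forall in H. induction ts; simpl; auto. f_equal.
  - apply H; simpl; auto.
  - apply IHts. intros; apply H; simpl; auto.
Qed.

Lemma subst_closed th t : closed Sg t -> sb th t = t.
Proof.
  intro C. rewrite <- (subst_Var t) at 2. apply subst_ext_occ. intros x Hx. destruct (C x Hx).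
Qed.

Lemma occurs_subst y th t : occurs Sg y (sb th t) -> exists z, occurs Sg z t /\ occurs Sg y (th z).
Proof.
  induction t using term_ind'; intro H0.
  - exists x; simpl; auto.
  - rewrite subst_App in H0. apply occurs_App in H0. apply Exists_exists in H0.
    destruct H0 as [w [Hw Ho]]. apply in_map_iff in Hw. destruct Hw as [u [<- Hu]].
    rewrite Forall_forall in H. destruct (H u Hu Ho) as [z [Hz1 Hz2]].
    exists z. split; auto. apply occurs_App. apply Exists_exists. eauto.
Qed.

Lemma subst_eq_occ s1 s2 t x : sb s1 t = sb s2 t -> occurs Sg x t -> s1 x = s2 x.
Proof.
  induction t using term_ind'; intros E O.
  - simpl in *; subst; auto.
  - injection E as E. apply occurs_App in O. apply Exists_exists in O.
    destruct O as [u [Hu Ou]]. rewrite Forall_forall in H. apply (H u Hu); auto.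
    clear -E Hu. induction ts; simpl in *; [destruct Hu|]. injection E as E1 E2.
    destruct Hu; subst; auto.
Qed.

Lemma closed_subst_var th t x : occurs Sg x t -> closed Sg (sb th t) -> closed Sg (th x).
Proof.
  intros O C y Hy. induction t using term_ind'.
  - simpl in *; subst. apply (C y Hy).
  - apply occurs_App in O. apply Exists_exists in O. destruct O as [u [Hu Ou]].
    rewrite Forall_forall in H. apply (H u Hu Ou). intros z Hz. apply (C z).
    apply occurs_App. apply Exists_exists. exists (sb th u). split; auto. apply in_map; auto.
Qed.

End S1.

Section S2.
Variable Sg : signature.
Local Notation tm := (term Sg).
Local Notation sb := (subst Sg).

Fixpoint size (t : tm) : nat :=
  match t with
  | Var _ => 1
  | App _ ts => S ((fix sl (l : list tm) : nat :=
       match l with [] => 0 | u :: l' => size u + sl l' end) ts)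
  end.

Fixpoint vars (t : tm) : list nat :=
  match t with
  | Var x => [x]
  | App _ ts => (fix vl (l : list tm) : list nat :=
       match l with [] => [] | u :: l' => vars u ++ vl l' end) ts
  end.

Lemma size_cons f u l : size (App f (u :: l)) = size u + size (App f l).
Proof. simpl. lia. Qed.

Lemma size_in f u ts : In u ts -> size u < size (App f ts).
Proof.
  induction ts; simpl; [tauto|]. intros [<-|H]; [lia|]. apply IHts in H. simpl in H. lia.
Qed.

Lemma vars_iff x t : In x (vars t) <-> occurs Sg x t.
Proof.
  induction t using term_ind'.
  - simpl. split; [intros [H|[]]; auto | intro; left; auto].
  - rewrite occurs_App. simpl. induction ts; simpl.
    + split; [tauto | intro H0; inversion H0].
    + inversion H; subst. rewrite in_app_iff, H2, IHts by auto. split.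
      * intros [A|A]; [left|right]; auto.
      * intro A; inversion A; subst; auto.
Qed.

Lemma size_occ sg x t : occurs Sg x t -> size (sg x) <= size (sb sg t).
Proof.
  induction t using term_ind'; intro O.
  - simpl in O; subst; simpl; lia.
  - apply occurs_App in O. apply Exists_exists in O. destruct O as [u [Hu Ou]].
    rewrite Forall_forall in H. specialize (H u Hu Ou).
    rewrite subst_App. pose proof (size_in f (sb sg u) (map (sb sg) ts)) as K.
    assert (In (sb sg u) (map (sb sg) ts)) by (apply in_map; auto). specialize (K H0). lia.
Qed.

Lemma occurs_check sg x f ts : occurs Sg x (App f ts) -> sg x <> sb sg (App f ts).
Proof.
  intros O E. apply occurs_App in O. apply Exists_exists in O. destruct O as [u [Hu Ou]].
  pose proof (size_occ sg x u Ou). rewrite subst_App in E.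
  assert (In (sb sg u) (map (sb sg) ts)) by (apply in_map; auto).
  pose proof (size_in f _ _ H0). rewrite <- E in H1. lia.
Qed.

Definition eqn := (tm * tm)%type.
Definition unif (sg : nat -> tm) (E : list eqn) : Prop :=
  Forall (fun p => sb sg (fst p) = sb sg (snd p)) E.
Definition MGU (th : nat -> tm) (E : list eqn) : Prop :=
  unif th E /\ forall sg, unif sg E -> exists rho, forall x, sg x = sb rho (th x).
Definition varsE (E : list eqn) : list nat := flat_map (fun p => vars (fst p) ++ vars (snd p)) E.
Definition sizeE (E : list eqn) : nat := fold_right (fun p n => size (fst p) + size (snd p) + n) 0 E.
Definition nv (E : list eqn) : nat := length (nodup Nat.eq_dec (varsE E)).

Lemma nv_le E1 E2 : incl (varsE E1) (varsE E2) -> nv E1 <= nv E2.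
Proof.
  intro I. unfold nv. apply NoDup_incl_length; [apply NoDup_nodup|].
  intros a Ha. apply nodup_In. apply nodup_In in Ha. auto.
Qed.

Lemma nv_lt E1 E2 x : incl (varsE E1) (varsE E2) -> In x (varsE E2) -> ~ In x (varsE E1) -> nv E1 < nv E2.
Proof.
  intros I X NX. unfold nv.
  apply Nat.le_lt_trans with (length (remove Nat.eq_dec x (nodup Nat.eq_dec (varsE E2)))).
  - apply NoDup_incl_length; [apply NoDup_nodup|].
    intros a Ha. apply nodup_In in Ha. apply in_in_remove.
    + intro; subst; auto.
    + apply nodup_In; auto.
  - apply remove_length_lt. apply nodup_In; auto.
Qed.

Lemma varsE_cons z a b E : In z (varsE ((a, b) :: E)) <-> occurs Sg z a \/ occurs Sg z b \/ In z (varsE E).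
Proof. unfold varsE. simpl. rewrite !in_app_iff, !vars_iff. tauto. Qed.

Lemma MGU_equiv E1 E2 th : (forall sg, unif sg E1 <-> unif sg E2) -> MGU th E1 -> MGU th E2.
Proof.
  intros Eq [U G]. split; [apply Eq; auto|]. intros sg Hs. apply G, Eq; auto.
Qed.

Definition sbx (x : nat) (t : tm) : nat -> tm := fun y => if Nat.eqb y x then t else Var y.
Definition substE x t (E : list eqn) : list eqn :=
  map (fun p => (sb (sbx x t) (fst p), sb (sbx x t) (snd p))) E.

Lemma sbx_notin x t : ~ occurs Sg x t -> sb (sbx x t) t = t.
Proof.
  intro N. transitivity (sb (fun y => Var y) t); [|apply subst_Var]. apply subst_ext_occ.
  intros y Hy. unfold sbx. destruct (Nat.eqb_spec y x); subst; auto. contradiction.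
Qed.

Lemma vars_sbx x t s y : ~ occurs Sg x t -> occurs Sg y (sb (sbx x t) s) ->
  y <> x /\ (occurs Sg y t \/ occurs Sg y s).
Proof.
  intros N O. apply occurs_subst in O. destruct O as [z [Hz Oy]]. unfold sbx in Oy.
  destruct (Nat.eqb_spec z x).
  - split; [intro; subst; auto | auto].
  - simpl in Oy. subst. split; auto.
Qed.

Lemma varsE_substE x t E y : ~ occurs Sg x t -> In y (varsE (substE x t E)) ->
  y <> x /\ (occurs Sg y t \/ In y (varsE E)).
Proof.
  intro N. induction E as [|[a b] E IH]; simpl; [tauto|].
  rewrite !in_app_iff, !vars_iff. intros [[A|A]|A].
  - destruct (vars_sbx x t a y N A) as [B [C|C]]; split; auto; tauto.
  - destruct (vars_sbx x t b y N A) as [B [C|C]]; split; auto; tauto.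
  - destruct (IH A) as [B [C|C]]; split; auto; tauto.
Qed.

Lemma unif_substE x t E sg : sg x = sb sg t -> unif sg E -> unif sg (substE x t E).
Proof.
  intros Hx U. unfold unif, substE in *. rewrite Forall_map.
  eapply Forall_impl; [|exact U]. intros [a b] H; simpl in *.
  assert (Hs : forall s, sb sg (sb (sbx x t) s) = sb sg s).
  { intro s. rewrite subst_comp. apply subst_ext_occ. intros z _. unfold sbx.
    destruct (Nat.eqb_spec z x); subst; auto. }
  rewrite !Hs. auto.
Qed.

Lemma elim_MGU x t E th' : ~ occurs Sg x t -> MGU th' (substE x t E) ->
  MGU (fun y => sb th' (sbx x t y)) ((Var x, t) :: E).
Proof.
  intros N [U G]. split.
  - constructor.
    + simpl. unfold sbx at 1. rewrite Nat.eqb_refl. rewrite <- (subst_comp Sg (sbx x t) th').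
      rewrite sbx_notin; auto.
    + unfold unif, substE in U. rewrite Forall_map in U. eapply Forall_impl; [|exact U].
      intros [a b] H; simpl in *. rewrite <- !(subst_comp Sg (sbx x t) th'). auto.
  - intros sg Hs. inversion Hs; subst. simpl in H1.
    destruct (G sg (unif_substE x t E sg H1 H2)) as [rho Hr].
    exists rho. intro y. unfold sbx. destruct (Nat.eqb_spec y x).
    + subst. rewrite H1. rewrite subst_comp. apply subst_ext_occ. intros; auto.
    + simpl. auto.
Qed.

Lemma unif_swap sg a b E : unif sg ((a, b) :: E) <-> unif sg ((b, a) :: E).
Proof.
  split; intro H; inversion H; subst; constructor; simpl in *; auto.
Qed.

Lemma combine_unif sg ts ts' E : length ts = length ts' ->
  (unif sg (combine ts ts' ++ E) <-> map (sb sg) ts = map (sb sg) ts' /\ unif sg E).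
Proof.
  revert ts'. induction ts as [|a ts IH]; intros [|b ts'] L; simpl in *; try discriminate.
  - split; [intro; auto | tauto].
  - injection L as L. unfold unif in *. rewrite Forall_cons_iff, IH by auto. simpl. split.
    + intros [A [B C]]. rewrite A, B. auto.
    + intros [A C]. injection A as A1 A2. auto.
Qed.

Lemma varsE_app E1 E2 : varsE (E1 ++ E2) = varsE E1 ++ varsE E2.
Proof. unfold varsE. apply flat_map_app. Qed.

Lemma sizeE_app E1 E2 : sizeE (E1 ++ E2) = sizeE E1 + sizeE E2.
Proof. induction E1; simpl; auto. rewrite IHE1. lia. Qed.

Lemma combine_vars_size f g ts ts' :
  incl (varsE (combine ts ts')) (vars (App f ts) ++ vars (App g ts')) /\
  sizeE (combine ts ts') < size (App f ts) + size (App g ts').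
Proof.
  revert ts'. induction ts as [|a ts IH]; intros [|b ts']; simpl; try (split; [intros z []| lia]).
  destruct (IH ts') as [I S]. split.
  - intros z. simpl. rewrite !in_app_iff. intros [[A|A]|A]; auto.
    apply I in A. rewrite in_app_iff in A. simpl in A. destruct A; auto.
  - simpl in S. lia.
Qed.

Theorem robinson : forall E sg, unif sg E -> exists th, MGU th E.
Proof.
  assert (M : forall n m E, nv E = n -> sizeE E = m -> forall sg, unif sg E -> exists th, MGU th E).
  { induction n as [n IHn] using lt_wf_ind. induction m as [m IHm] using lt_wf_ind.
    assert (R : forall E', nv E' <= n -> sizeE E' < m \/ nv E' < n ->
                 forall sg, unif sg E' -> exists th, MGU th E').
    { intros E' L1 L2 sg U. destruct (Nat.eq_dec (nv E') n).
      - destruct L2; [|lia]. eapply IHm; eauto.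
      - eapply (IHn (nv E')); eauto. lia. }
    intros [|[a b] E0] Hn Hm sg U.
    - exists (fun x => Var x). split; [constructor|]. intros sg' _. exists sg'. auto.
    -
      assert (EL : forall x t, ~ occurs Sg x t -> sb sg (Var x) = sb sg t ->
               incl (varsE ((Var x, t) :: E0)) (varsE ((a, b) :: E0)) ->
               (forall sg', unif sg' ((Var x, t) :: E0) <-> unif sg' ((a, b) :: E0)) ->
               exists th, MGU th ((a, b) :: E0)).
      { intros x t N Hx I Eq.
        assert (U' : unif sg (substE x t E0)).
        { inversion U; subst. apply unif_substE; auto. }
        destruct (R (substE x t E0)) with (sg := sg) as [th' Ht]; auto.
        - subst n. apply nv_le. intros z Hz. apply I. destruct (varsE_substE x t E0 z N Hz) as [_ [A|A]];
            rewrite varsE_cons; tauto.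
        - right. subst n. apply (nv_lt _ _ x).
          + intros z Hz. apply I. destruct (varsE_substE x t E0 z N Hz) as [_ [A|A]];
            rewrite varsE_cons; tauto.
          + apply I. rewrite varsE_cons. left. simpl. auto.
          + intro Hz. destruct (varsE_substE x t E0 x N Hz) as [A _]. auto.
        - exists (fun y => sb th' (sbx x t y)). eapply MGU_equiv; [exact Eq|].
          apply elim_MGU; auto. }
      inversion U as [|? ? Hab HE0]; subst. simpl in Hab.
      destruct a as [x|f ts]; destruct b as [y|g ts'].
      + destruct (Nat.eq_dec x y).
        * subst y. destruct (R E0) with (sg := sg) as [th Ht]; auto.
          -- try subst n. apply nv_le. intros z Hz. rewrite varsE_cons. auto.
          -- left. try subst m. simpl. lia.
          -- exists th. eapply MGU_equiv; [|exact Ht]. intro sg'. split; intro H.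
             ++ constructor; auto.
             ++ inversion H; auto.
        * apply (EL x (Var y)).
          -- simpl. auto.
          -- exact Hab.
          -- intros z; auto.
          -- tauto.
      + destruct (classic (occurs Sg x (App g ts'))) as [O|N].
        * exfalso. apply (occurs_check sg x g ts' O). exact Hab.
        * apply (EL x (App g ts')); [exact N | exact Hab | intros z; auto | tauto].
      + destruct (classic (occurs Sg y (App f ts))) as [O|N].
        * exfalso. apply (occurs_check sg y f ts O). auto.
        * apply (EL y (App f ts)); [exact N | symmetry; exact Hab | |].
          -- intros z. rewrite !varsE_cons. tauto.
          -- intro. apply unif_swap.
      + rewrite !subst_App in Hab. injection Hab as Hfg Hmap. subst g.
        assert (L : length ts = length ts').
        { rewrite <- (length_map (sb sg) ts), <- (length_map (sb sg) ts'), Hmap. auto. }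
        destruct (combine_vars_size f f ts ts') as [I S].
        destruct (R (combine ts ts' ++ E0)) with (sg := sg) as [th Ht].
        * try subst n. apply nv_le. rewrite varsE_app. intros z. rewrite in_app_iff, varsE_cons. intros [A|A].
          -- apply I in A. rewrite in_app_iff, !vars_iff in A. tauto.
          -- auto.
        * left. try subst m. rewrite sizeE_app. change (sizeE ((App f ts, App f ts') :: E0)) with (size (App f ts) + size (App f ts') + sizeE E0). lia.
        * apply combine_unif; auto.
        * exists th. eapply MGU_equiv; [|exact Ht]. intro sg'. rewrite combine_unif by auto.
          split.
          -- intros [A B]. constructor; auto. simpl. f_equal. exact A.
          -- intro H. inversion H; subst. simpl in H2.
             injection H2 as H2. auto. }
  intros E sg U. eapply M; eauto.
Qed.

End S2.

Section S3.
Variable Sg : signature.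
Local Notation tm := (term Sg).
Local Notation sb := (subst Sg).

Definition maxv (t : tm) : nat := fold_right Nat.max 0 (vars Sg t).

Lemma maxv_occ x t : occurs Sg x t -> x <= maxv t.
Proof.
  intro O. apply vars_iff in O. unfold maxv. induction (vars Sg t); simpl in *; [tauto|].
  destruct O; subst; [lia|]. specialize (IHl H). lia.
Qed.

Lemma rename_id t : rename Sg (fun x => x) t = t.
Proof. apply subst_Var. Qed.

Lemma flow_equiv_refl g : flow_equiv Sg g g.
Proof. exists (fun x => x). split; auto. rewrite !rename_id. auto. Qed.

Lemma MGU_is_mgu th a b : MGU Sg th [(a, b)] -> is_mgu Sg th a b.
Proof.
  intros [U G]. inversion U; subst. split; auto. intros sg E. apply G. constructor; auto.
Qed.

Lemma prod_ex (f h : flow Sg) tau sig :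
  sb tau (snd f) = sb sig (fst h) ->
  exists g rho, prod Sg f h g /\ sb rho (fst g) = sb tau (fst f).
Proof.
  intro E.
  set (N := S (Nat.max (maxv (fst f)) (maxv (snd f)))).
  set (s := fun y => y + N).
  set (kap := fun y => if N <=? y then sig (y - N) else tau y).
  assert (Kf : forall t, (forall x, occurs Sg x t -> x < N) -> sb kap t = sb tau t).
  { intros t Ht. apply subst_ext_occ. intros x Hx. unfold kap. specialize (Ht x Hx).
    destruct (Nat.leb_spec N x); [lia|auto]. }
  assert (Kh : forall t, sb kap (rename Sg s t) = sb sig t).
  { intro t. unfold rename. rewrite subst_comp. apply subst_ext_occ. intros x _. simpl.
    unfold kap, s. destruct (Nat.leb_spec N (x + N)); [|lia]. f_equal. lia. }
  assert (Ov : forall x, occurs Sg x (snd f) -> x < N).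
  { intros x Hx. apply maxv_occ in Hx. unfold N. lia. }
  assert (Ou : forall x, occurs Sg x (fst f) -> x < N).
  { intros x Hx. apply maxv_occ in Hx. unfold N. lia. }
  destruct (robinson Sg [(snd f, rename Sg s (fst h))] kap) as [th Hth].
  { constructor; [|constructor]. simpl. rewrite Kh, Kf; auto. }
  exists (sb th (fst f), sb th (rename Sg s (snd h))).
  destruct Hth as [U G]. destruct (G kap) as [rho Hr].
  { constructor; [|constructor]. simpl. rewrite Kh, Kf; auto. }
  exists rho. split.
  - exists s, th. split; [intros x y Hxy; unfold s in Hxy; lia|]. split.
    + intros x Hx y _. unfold s. destruct Hx as [Hx|Hx]; [apply Ou in Hx|apply Ov in Hx]; lia.
    + split; [apply MGU_is_mgu; split; auto|]. apply flow_equiv_refl.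
  - simpl. rewrite subst_comp. rewrite <- (Kf (fst f)) by auto.
    apply subst_ext_occ. intros x _. auto.
Qed.

Lemma edge_match F t c : comp_edge Sg F t c ->
  exists f tau, In f F /\ sb tau (snd f) = t /\ sb tau (fst f) = c.
Proof.
  intros [[_ [Ct _]] [_ [f [Hf [s [th [_ [_ [[M _] [r [_ [R1 _]]]]]]]]]]]].
  simpl in *. exists f, (fun y => rename Sg r (th y)). split; auto.
  unfold rename in *. split.
  - rewrite <- subst_comp. rewrite M. rewrite !(subst_closed Sg _ t Ct). auto.
  - rewrite <- subst_comp. auto.
Qed.

Lemma cyc_next (R : tm -> tm -> Prop) c t : clos_trans tm R c t -> clos_trans tm R t t ->
  exists c', R c c' /\ clos_trans tm R c' t.
Proof.
  intros H Ht. apply clos_trans_t1n in H. inversion H; subst.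
  - exists t; auto.
  - exists y. split; auto. apply clos_t1n_trans; auto.
Qed.

Lemma cycle_pow F t : clos_trans tm (comp_edge Sg F) t t ->
  forall n, exists g, pow Sg F n g.
Proof.
  intros Ct.
  assert (P : forall n, exists h sig c, pow Sg F n h /\ sb sig (fst h) = c /\
                                        clos_trans tm (comp_edge Sg F) c t).
  { induction n as [|m [h [sig [c [Hp [Hc Hct]]]]]].
    - destruct (cyc_next _ _ _ Ct Ct) as [c1 [E1 T1]].
      destruct (edge_match F t c1 E1) as [f [tau [Hf [_ Hu]]]].
      exists f, tau, c1. split; auto. exists f. split; auto. apply flow_equiv_refl.
    - destruct (cyc_next _ _ _ Hct Ct) as [c1 [E1 T1]].
      destruct (edge_match F c c1 E1) as [f [tau [Hf [Hv Hu]]]].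
      destruct (prod_ex f h tau sig) as [g [rho [Hpr Hr]]]; [congruence|].
      exists g, rho, c1. split; [|split; [congruence|auto]].
      exists f, h. auto. }
  intro n. destruct (P n) as [h [_ [_ [Hp _]]]]. eauto.
Qed.

End S3.

Fixpoint chainL {A} (R : A -> A -> Prop) (l : list A) : Prop :=
  match l with
  | x :: l' => match l' with [] => True | y :: _ => R x y /\ chainL R l' end
  | [] => True
  end.

Lemma chainL_app_r {A} (R : A -> A -> Prop) l1 l2 : chainL R (l1 ++ l2) -> chainL R l2.
Proof.
  induction l1 as [|a l1 IH]; simpl; auto. intro H. apply IH.
  destruct (l1 ++ l2); tauto.
Qed.

Lemma chainL_app_l {A} (R : A -> A -> Prop) l1 l2 : chainL R (l1 ++ l2) -> chainL R l1.
Proof.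
  induction l1 as [|a l1 IH]; simpl; auto. destruct l1 as [|b l1]; auto.
  simpl in *. intros [H1 H2]. split; auto. apply IH; auto.
Qed.

Lemma chainL_snoc {A} (R : A -> A -> Prop) l x y : chainL R (l ++ [x]) -> R x y -> chainL R (l ++ [x; y]).
Proof.
  induction l as [|a l IH]; simpl; auto. destruct l as [|b l]; simpl in *.
  - intros [H1 _] H2. auto.
  - intros [H1 H2] H3. split; auto. apply IH; auto.
Qed.

Lemma chain_ct {A} (R : A -> A -> Prop) x m y : chainL R (x :: m ++ [y]) -> clos_trans A R x y.
Proof.
  revert x. induction m as [|z m IH]; simpl; intros x H.
  - apply t_step. tauto.
  - destruct H as [H1 H2]. apply t_trans with z; [apply t_step; auto | apply IH; auto].
Qed.

Lemma chainL_map {A B} (R : A -> A -> Prop) (R' : B -> B -> Prop) (phi : A -> B) l :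
  (forall a b, R a b -> R' (phi a) (phi b)) -> chainL R l -> chainL R' (map phi l).
Proof.
  intro HR. induction l as [|a l IH]; simpl; auto. destruct l as [|b l]; simpl; auto.
  intros [H1 H2]. split; auto. apply IH in H2. simpl in H2. auto.
Qed.

Lemma not_nodup_split {A} (l : list A) : ~ NoDup l ->
  exists x l1 l2 l3, l = l1 ++ x :: l2 ++ x :: l3.
Proof.
  induction l as [|a l IH]; intro N; [exfalso; apply N; constructor|].
  destruct (classic (In a l)) as [I|I].
  - apply in_split in I. destruct I as [l2 [l3 ->]]. exists a, [], l2, l3. auto.
  - destruct IH as [x [l1 [l2 [l3 E]]]].
    + intro D. apply N. constructor; auto.
    + exists x, (a :: l1), l2, l3. rewrite E. auto.
Qed.

Lemma dup_cycle {A} (R : A -> A -> Prop) l : chainL R l -> ~ NoDup l -> exists x, clos_trans A R x x.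
Proof.
  intros C N. destruct (not_nodup_split l N) as [x [l1 [l2 [l3 ->]]]].
  apply chainL_app_r in C. exists x. apply (chain_ct R x l2 x).
  replace (x :: l2 ++ x :: l3) with ((x :: l2 ++ [x]) ++ l3) in C.
  - apply chainL_app_l in C. auto.
  - simpl. rewrite <- app_assoc. auto.
Qed.

Section S4.
Variable Sg : signature.
Local Notation tm := (term Sg).
Local Notation sb := (subst Sg).
Variable F : wiring Sg.

Definition step (a b : tm) : Prop :=
  exists f tau, In f F /\ sb tau (snd f) = a /\ sb tau (fst f) = b.

Lemma pow_chain n g : pow Sg F n g -> forall sig, exists l, length l = n /\
  chainL step (sb sig (snd g) :: l ++ [sb sig (fst g)]).
Proof.
  revert g. induction n as [|m IH]; intros g Hp sig.
  - destruct Hp as [f [Hf [r [_ [R1 R2]]]]]. exists []. split; auto. simpl. split; auto.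
    exists f, (fun y => sb sig (Var (r y))). split; auto. rewrite <- R1, <- R2.
    unfold rename. rewrite !subst_comp. auto.
  - destruct Hp as [f [h [Hf [Hh [s [th [_ [_ [[M _] [r [_ [R1 R2]]]]]]]]]]]].
    simpl in R1, R2.
    set (sig' := fun y => sb sig (rename Sg r (th (s y)))).
    set (tau := fun y => sb sig (rename Sg r (th y))).
    destruct (IH h Hh sig') as [l [Hl C]].
    assert (E1 : sb sig' (snd h) = sb sig (snd g)).
    { rewrite <- R2. unfold sig', rename. rewrite !subst_comp. apply subst_ext_occ.
      intros x _. simpl. rewrite !subst_comp. auto. }
    assert (E2 : sb sig' (fst h) = sb tau (snd f)).
    { unfold tau. transitivity (sb sig (rename Sg r (sb th (snd f)))).
      - rewrite M. unfold sig', rename. rewrite !subst_comp. apply subst_ext_occ.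
        intros x _. simpl. rewrite !subst_comp. auto.
      - unfold rename. rewrite !subst_comp. apply subst_ext_occ; intros ? _; simpl; rewrite ?subst_comp; reflexivity. }
    exists (l ++ [sb sig' (fst h)]). split; [rewrite length_app; simpl; lia|].
    rewrite <- E1. rewrite <- app_assoc.
    change (sb sig' (snd h) :: l ++ [sb sig' (fst h); sb sig (fst g)])
      with ((sb sig' (snd h) :: l) ++ [sb sig' (fst h); sb sig (fst g)]).
    apply (chainL_snoc step (sb sig' (snd h) :: l)); [exact C|].
    exists f, tau. split; auto. split; auto. rewrite <- R1. unfold tau, rename.
    rewrite !subst_comp. apply subst_ext_occ; intros ? _; simpl; rewrite ?subst_comp; reflexivity.
Qed.

End S4.

Section S5.
Variable Sg : signature.
Local Notation tm := (term Sg).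
Local Notation sb := (subst Sg).
Variable F : wiring Sg.

Definition goodsym (g : sym Sg) : Prop :=
  g = star Sg \/ exists f, In f F /\ (sym_occurs Sg g (fst f) \/ sym_occurs Sg g (snd f)).
Definition good (g : sym Sg) (ts : list tm) : Prop := goodsym g /\ length ts = arity Sg g.

Fixpoint phi (d : nat) (t : tm) {struct d} : tm :=
  match t with
  | Var _ => starT Sg
  | App g ts =>
      match d with
      | 0 => match ts with
             | [] => if excluded_middle_informative (good g []) then App g [] else starT Sg
             | _ => starT Sg
             end
      | S d' => if excluded_middle_informative (good g ts) then App g (map (phi d') ts) else starT Sg
      end
  end.

Definition Q (d : nat) (t : tm) : Prop :=
  wf Sg t /\ closed Sg t /\ height Sg t <= d /\ forall g, sym_occurs Sg g t -> goodsym g.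

Lemma Q_star d : Q d (starT Sg).
Proof.
  unfold starT. split; [|split; [|split]].
  - apply wf_App. split; [simpl; rewrite arity_star; auto | constructor].
  - intros x Hx. apply occurs_App in Hx. inversion Hx.
  - rewrite height_nil. lia.
  - intros g Hg. apply sym_occurs_App in Hg. destruct Hg as [Hg|Hg]; [left; auto | inversion Hg].
Qed.

Lemma Q_phi d t : Q d (phi d t).
Proof.
  revert t. induction d as [|d IH]; intros [x|g ts]; simpl; try apply Q_star.
  - destruct ts; [|apply Q_star]. destruct excluded_middle_informative as [[G L]|]; [|apply Q_star].
    split; [|split; [|split]].
    + apply wf_App. split; auto.
    + intros x Hx. apply occurs_App in Hx. inversion Hx.
    + rewrite height_nil. lia.
    + intros g' Hg. apply sym_occurs_App in Hg. destruct Hg as [->|Hg]; auto. inversion Hg.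
  - destruct excluded_middle_informative as [[G L]|]; [|apply Q_star].
    split; [|split; [|split]].
    + apply wf_App. rewrite length_map. split; auto. apply Forall_forall. intros u Hu.
      apply in_map_iff in Hu. destruct Hu as [v [<- _]]. apply IH.
    + intros x Hx. apply occurs_App in Hx. apply Exists_exists in Hx. destruct Hx as [u [Hu Ox]].
      apply in_map_iff in Hu. destruct Hu as [v [<- _]]. apply (IH v) in Ox; auto.
    + apply height_App_le. apply Forall_forall. intros u Hu.
      apply in_map_iff in Hu. destruct Hu as [v [<- _]]. destruct (IH v) as [_ [_ [H _]]]. lia.
    + intros g' Hg. apply sym_occurs_App in Hg. destruct Hg as [->|Hg]; auto.
      apply Exists_exists in Hg. destruct Hg as [u [Hu Ox]].
      apply in_map_iff in Hu. destruct Hu as [v [<- _]]. apply (IH v) in Ox; auto.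
Qed.

Lemma phi_subst (D : nat) (sig : nat -> tm) (K : nat -> nat) : forall t d c,
  c + d = D ->
  (forall x k, In k (occ_heights Sg x t) -> K x = c + k) ->
  height Sg t <= d -> wf Sg t -> (forall g, sym_occurs Sg g t -> goodsym g) ->
  phi d (sb sig t) = sb (fun x => phi (D - K x) (sig x)) t.
Proof.
  intro t. induction t as [x|g ts IH] using term_ind'; intros d c Hd HK Hh Hw Hs.
  - simpl. assert (K x = c) by (rewrite (HK x 0); simpl; [lia|]; rewrite Nat.eqb_refl; simpl; auto).
    f_equal. lia.
  - assert (Gs : goodsym g) by (apply Hs; apply sym_occurs_App; auto).
    apply wf_App in Hw. destruct Hw as [L Fw]. apply height_App_le in Hh.
    destruct d as [|d].
    + destruct ts as [|u ts]; [|inversion Hh; lia]. simpl.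
      destruct excluded_middle_informative as [_|N]; auto. exfalso; apply N; split; auto.
    + rewrite subst_App. simpl. destruct excluded_middle_informative as [_|N].
      * f_equal. rewrite map_map. apply map_ext_in. intros u Hu.
        rewrite Forall_forall in IH, Fw, Hh. apply (IH u Hu d (S c)); auto.
        -- lia.
        -- intros x k Hk. rewrite (HK x (S k)); [lia|]. rewrite occ_heights_App.
           apply in_map. apply in_flat_map. eauto.
        -- specialize (Hh u Hu). lia.
        -- intros g' Hg'. apply Hs. apply sym_occurs_App. right. apply Exists_exists. eauto.
      * exfalso. apply N. split; auto. rewrite length_map. auto.
Qed.

Lemma edge_prod (f : flow Sg) (sg : nat -> tm) :
  (forall x, occurs Sg x (fst f) -> occurs Sg x (snd f)) ->
  closed Sg (sb sg (snd f)) ->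
  Defs.prod Sg f (Defs.fact Sg (sb sg (snd f))) (Defs.fact Sg (sb sg (fst f))).
Proof.
  intros Hv C.
  set (th := fun x => if excluded_middle_informative (occurs Sg x (snd f)) then sg x else Var x).
  assert (Th : forall t, (forall x, occurs Sg x t -> occurs Sg x (snd f)) -> sb th t = sb sg t).
  { intros t Ht. apply subst_ext_occ. intros x Hx. unfold th.
    destruct excluded_middle_informative; auto. exfalso; auto. }
  exists (fun x => x), th. split; auto. split; [|split].
  - intros x _ y Hy. exfalso. destruct Hy as [Hy|Hy]; simpl in Hy.
    + apply (C y Hy).
    + destruct Hy.
  - simpl. rewrite rename_id. split.
    + rewrite (subst_closed Sg th (sb sg (snd f)) C). apply Th. auto.
    + intros sg' E. exists sg'. intro x. unfold th. destruct excluded_middle_informative as [O|O]; auto.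
      rewrite (subst_closed Sg sg' (sb sg (snd f)) C) in E.
      rewrite (subst_closed Sg sg' (sg x)).
      * apply (subst_eq_occ Sg sg' sg (snd f)); auto.
      * apply (closed_subst_var Sg sg (snd f)); auto.
  - exists (fun x => x). split; auto. simpl. rewrite !rename_id. rewrite Th by auto. split; auto.
Qed.

Fixpoint syms (t : tm) : list (sym Sg) :=
  match t with
  | Var _ => []
  | App g ts => g :: (fix sl (l : list tm) : list (sym Sg) :=
       match l with [] => [] | u :: l' => syms u ++ sl l' end) ts
  end.

Lemma syms_occ g t : sym_occurs Sg g t -> In g (syms t).
Proof.
  induction t as [x|f ts IH] using term_ind'; [simpl; tauto|].
  intro H. apply sym_occurs_App in H. destruct H as [->|H]; simpl; auto. right.
  induction ts as [|u ts IHl]; [inversion H|]. inversion IH; subst. inversion H; subst.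
  - apply in_app_iff. auto.
  - apply in_app_iff. right. apply IHl; auto.
Qed.

Definition SL : list (sym Sg) := star Sg :: flat_map (fun f => syms (fst f) ++ syms (snd f)) F.

Lemma goodsym_SL g : goodsym g -> In g SL.
Proof.
  intros [->|[f [Hf Ho]]]; simpl; auto. right. apply in_flat_map. exists f. split; auto.
  apply in_app_iff. destruct Ho; [left|right]; apply syms_occ; auto.
Qed.

Fixpoint lists (n : nat) (L : list tm) : list (list tm) :=
  match n with
  | 0 => [[]]
  | S n => flat_map (fun x => map (cons x) (lists n L)) L
  end.

Lemma lists_complete L ts : Forall (fun t => In t L) ts -> In ts (lists (length ts) L).
Proof.
  induction ts as [|a ts IH]; simpl; auto. intro H. inversion H; subst.
  apply in_flat_map. exists a. split; auto. apply in_map. auto.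
Qed.

Fixpoint enum (d : nat) : list tm :=
  match d with
  | 0 => map (fun g => App g []) SL
  | S d => flat_map (fun g => map (App g) (lists (arity Sg g) (enum d))) SL
  end.

Lemma enum_complete t : forall d, Q d t -> In t (enum d).
Proof.
  induction t as [x|g ts IH] using term_ind'; intros d [Hw [Hc [Hh Hs]]].
  - exfalso. apply (Hc x). simpl. auto.
  - assert (Gs : In g SL) by (apply goodsym_SL, Hs, sym_occurs_App; auto).
    apply wf_App in Hw. destruct Hw as [L Fw]. apply height_App_le in Hh.
    destruct d as [|d].
    + destruct ts as [|u ts]; [|inversion Hh; lia].
      change (In (App g []) (map (fun g => App g []) SL)). apply (in_map (fun g0 => App g0 [])). auto.
    + change (In (App g ts) (flat_map (fun g => map (App g) (lists (arity Sg g) (enum d))) SL)).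
      apply in_flat_map. exists g. split; auto. apply in_map. rewrite <- L.
      apply lists_complete. rewrite Forall_forall in *. intros u Hu. apply IH; auto.
      split; [|split; [|split]]; auto.
      * intros x Hx. apply (Hc x). apply occurs_App. apply Exists_exists. eauto.
      * specialize (Hh u Hu). lia.
      * intros g' Hg'. apply Hs. apply sym_occurs_App. right. apply Exists_exists. eauto.
Qed.

Lemma flow_height_le f : In f F -> flow_height Sg f <= wiring_height Sg F.
Proof.
  induction F as [|a l IHl]; simpl; [tauto|]. intros [->|H]; [lia|]. apply IHl in H. lia.
Qed.

Lemma hd_in (l : list nat) k : In k l -> In (hd 0 l) l.
Proof. destruct l; simpl; auto. Qed.

Lemma step_edge a b : is_wiring Sg F -> balanced Sg F -> step Sg F a b ->
  comp_edge Sg F (phi (wiring_height Sg F) a) (phi (wiring_height Sg F) b).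
Proof.
  intros W B [f [tau [Hf [Ha Hb]]]]. subst a b.
  set (H := wiring_height Sg F).
  set (K := fun x => hd 0 (occ_heights Sg x (fst f) ++ occ_heights Sg x (snd f))).
  destruct (W f Hf) as [Wu [Wv Ouv]]. pose proof (B f Hf) as Bf.
  pose proof (flow_height_le f Hf) as FH. unfold flow_height in FH.
  assert (HK : forall t, t = fst f \/ t = snd f -> forall x k, In k (occ_heights Sg x t) -> K x = 0 + k).
  { intros t Ht x k Hk. simpl. unfold K. apply (Bf x).
    - apply (hd_in _ k). apply in_app_iff. destruct Ht; subst; auto.
    - apply in_app_iff. destruct Ht; subst; auto. }
  assert (SS : forall t, t = fst f \/ t = snd f -> forall g, sym_occurs Sg g t -> goodsym g).
  { intros t Ht g Hg. right. exists f. split; auto. destruct Ht; subst; auto. }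
  assert (EA : phi H (sb tau (snd f)) = sb (fun x => phi (H - K x) (tau x)) (snd f)).
  { apply (phi_subst H tau K (snd f) H 0); auto; [apply HK; auto| lia | apply SS; auto]. }
  assert (EB : phi H (sb tau (fst f)) = sb (fun x => phi (H - K x) (tau x)) (fst f)).
  { apply (phi_subst H tau K (fst f) H 0); auto; [apply HK; auto| lia | apply SS; auto]. }
  pose proof (Q_phi H (sb tau (snd f))) as QA. pose proof (Q_phi H (sb tau (fst f))) as QB.
  rewrite EA in QA |- *. rewrite EB in QB |- *.
  split; [exact QA|split; [exact QB|]].
  exists f. split; auto. apply edge_prod; auto. apply QA.
Qed.

Theorem acyc_nil : is_wiring Sg F -> balanced Sg F -> acyclic Sg F -> nilpotent Sg F.
Proof.
  intros W B A. apply NNPP. intro NN.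
  set (H := wiring_height Sg F). set (L := enum H).
  assert (Ex : exists g, pow Sg F (length L) g).
  { apply NNPP. intro N. apply NN. exists (length L). intros g Hg. apply N. eauto. }
  destruct Ex as [g Hg].
  destruct (pow_chain Sg F _ g Hg (fun x => Var x)) as [l [Hl C]].
  set (l' := map (phi H) (sb (fun x => Var x) (snd g) :: l ++ [sb (fun x => Var x) (fst g)])).
  assert (C' : chainL (comp_edge Sg F) l').
  { apply (chainL_map (step Sg F)); auto. intros a b Hab. apply step_edge; auto. }
  assert (ND : ~ NoDup l').
  { intro D. apply NoDup_incl_length with (l' := L) in D.
    - unfold l' in D. rewrite length_map in D. simpl in D. rewrite length_app in D. simpl in D. lia.
    - intros x Hx. unfold l' in Hx. apply in_map_iff in Hx. destruct Hx as [y [<- _]].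
      apply enum_complete. apply Q_phi. }
  destruct (dup_cycle _ l' C' ND) as [x Hx]. apply A. eauto.
Qed.

End S5.

Theorem mainTheorem7 (S : signature) (F : wiring S) :
  is_wiring S F -> balanced S F -> (nilpotent S F <-> acyclic S F).
Proof.
  intros W B. split.
  - intros [n Hn] [t Ct]. destruct (cycle_pow S F t Ct n) as [g Hg]. exact (Hn g Hg).
  - apply acyc_nil; auto.
Qed.
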